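(* Let $\Gamma=F_r$ ($r\ge2$) be free on $\{a,b,a_3,\dots,a_r\}$, let $n\ge2$, $u_n=a^nba^{-n}b^{-1}$, $D_n=V_{u_n}\subseteq Y$. Let $t\in\Gamma$ and $y\in Y$, and assume $t$ starts with $u_n$. Then $ty\in D_n$ if and only if $y$ does not start with $t^{-1}u_nb$.
   Context: $Y$ is the Gromov boundary of $\Gamma$: infinite reduced words in the generators and their inverses, with $\Gamma$ acting by concatenation and cancellation. For nontrivial $s\in\Gamma$: $y\in Y$ starts with $s$ if $y=sy'$ with $y'\in Y$ and the last letter of the reduced word of $s$ is not the inverse of the first letter of $y'$; $V_s$ is the set of $y\in Y$ starting with $s$; $t\in\Gamma$ starts with $s$ if the reduced word of $t$ begins with the reduced word of $s$. *)

(* Defs.v *)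
(* Free group F_r on generators indexed by
   0..r-1 (generator 0 = a, generator 1 = b, 2..r-1 = a_3..a_r). *)
From mathcomp Require Import all_boot.
Set Implicit Arguments. Unset Strict Implicit. Unset Printing Implicit Defensive.

(* A letter (i, true) is the generator x_i, (i, false) is x_i^{-1}. *)
Definition letter := (nat * bool)%type.
Definition linv (l : letter) : letter := (l.1, ~~ l.2).

Definition nocancel (p q : letter) : bool := q != linv p.
Definition reduced (w : seq letter) : bool := sorted nocancel w.

Definition inGamma (r : nat) (w : seq letter) : bool :=
  reduced w && all (fun l => l.1 < r) w.

Definition reduce (w : seq letter) : seq letter :=
  foldr (fun x acc => match acc with
                      | y :: acc' => if y == linv x then acc' else x :: acc
                      | [::] => [:: x] end) [::] w.

Definition gmul (w1 w2 : seq letter) : seq letter := reduce (w1 ++ w2).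
Definition ginv (w : seq letter) : seq letter := rev (map linv w).

(* Gromov boundary Y: infinite reduced words *)
Definition stream := nat -> letter.
Definition inY (r : nat) (y : stream) : Prop :=
  (forall k, (y k).1 < r) /\ (forall k, y k.+1 != linv (y k)).

Definition scons (x : letter) (y : stream) : stream :=
  fun k => if k is k'.+1 then y k' else x.

(* action on the boundary: concatenation with cancellation; the word is
   processed from its last letter to its first *)
Fixpoint act_rev (rw : seq letter) (y : stream) : stream :=
  match rw with
  | [::] => y
  | x :: rw' => if y 0 == linv x then act_rev rw' (fun k => y k.+1)
                else act_rev rw' (scons x y)
  end.
Definition act (w : seq letter) (y : stream) : stream := act_rev (rev w) y.

Definition starts_with_bd (r : nat) (s : seq letter) (y : stream) : Prop :=
  s != [::] /\
  exists y', inY r y' /\ (forall k, y k = act s y' k) /\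
             y' 0 != linv (last (y' 0) s).

Definition V (r : nat) (s : seq letter) : stream -> Prop := starts_with_bd r s.

Definition ga : letter := (0, true).
Definition gb : letter := (1, true).

Definition u (n : nat) : seq letter :=
  nseq n ga ++ [:: gb] ++ nseq n (linv ga) ++ [:: linv gb].

Definition D (r n : nat) : stream -> Prop := V r (u n).

Definition starts_with (s t : seq letter) : bool := prefix s t.

(* Main.v *)
Require Import Defs.
From mathcomp Require Import all_boot.
From Stdlib Require Import FunctionalExtensionality.
Set Implicit Arguments. Unset Strict Implicit.

Definition rY (y : stream) := forall k, y k.+1 != linv (y k).
Definition bY r (y : stream) := forall k, (y k).1 < r.

Lemma linvK x : linv (linv x) = x.
Proof. by case: x => a b; rewrite /linv /= negbK. Qed.

Lemma act_rev_cat l1 l2 y : act_rev (l1 ++ l2) y = act_rev l2 (act_rev l1 y).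
Proof. by elim: l1 y => [|x l IH] y //=; case: ifP. Qed.

Lemma act_cat l1 l2 y : act (l1 ++ l2) y = act l1 (act l2 y).
Proof. by rewrite /act rev_cat act_rev_cat. Qed.

Lemma act1 x y : act [:: x] y = if y 0 == linv x then (fun k => y k.+1) else scons x y.
Proof. by []. Qed.

Lemma act_cons x w y : act (x :: w) y = act [:: x] (act w y).
Proof. by rewrite -act_cat. Qed.

Lemma act1_rY x y : rY y -> rY (act [:: x] y).
Proof.
move=> Hy; rewrite act1; case: eqP => H k; first exact: Hy.
by case: k => [|k] /=; [apply/eqP | exact: Hy].
Qed.

Lemma act1_bY r x y : x.1 < r -> bY r y -> bY r (act [:: x] y).
Proof.
move=> Hx Hy; rewrite act1; case: eqP => H k //; by case: k.
Qed.

Lemma act1K x y : rY y -> act [:: linv x] (act [:: x] y) = y.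
Proof.
move=> Hy; rewrite (act1 x); case: eqP => H.
  rewrite act1 /= linvK.
  have -> : (y 1 == x) = false.
    apply/negbTE; have := Hy 0; by rewrite H linvK.
  by apply: functional_extensionality => -[|k] /=.
by rewrite act1 /= linvK eqxx; apply: functional_extensionality.
Qed.

Lemma act_rY w y : rY y -> rY (act w y).
Proof.
elim: w => [|x w IH] Hy //; rewrite act_cons; apply: act1_rY; exact: IH.
Qed.

Lemma act_bY r w y : all (fun l => l.1 < r) w -> bY r y -> bY r (act w y).
Proof.
elim: w => [|x w IH] //= /andP[Hx Hw] Hy; rewrite act_cons; apply: act1_bY => //.
exact: IH.
Qed.

Lemma ginv_cons x w : ginv (x :: w) = ginv w ++ [:: linv x].
Proof. by rewrite /ginv /= rev_cons cats1. Qed.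

Lemma ginv_cat l1 l2 : ginv (l1 ++ l2) = ginv l2 ++ ginv l1.
Proof. by rewrite /ginv map_cat rev_cat. Qed.

Lemma actK w y : rY y -> act (ginv w) (act w y) = y.
Proof.
elim: w y => [|x w IH] y Hy //.
rewrite act_cons ginv_cons act_cat act1K; first exact: IH.
exact: act_rY.
Qed.

Lemma ginvK w : ginv (ginv w) = w.
Proof. by rewrite /ginv map_rev revK (mapK linvK). Qed.

Lemma actKV w y : rY y -> act w (act (ginv w) y) = y.
Proof. by move=> Hy; have := actK (ginv w) Hy; rewrite ginvK. Qed.

Definition step (x : letter) (acc : seq letter) := match acc with
                      | y :: acc' => if y == linv x then acc' else x :: acc
                      | [::] => [:: x] end.

Lemma reduce_cons x w : reduce (x :: w) = step x (reduce w).
Proof. by []. Qed.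

Lemma reduce_cat l1 l2 : reduce (l1 ++ l2) = foldr step (reduce l2) l1.
Proof. by rewrite /reduce foldr_cat. Qed.

Lemma step_red x acc : reduced acc -> reduced (step x acc).
Proof.
case: acc => [|y acc] //= H; case: ifP => E; first exact: path_sorted H.
by rewrite /reduced /= /nocancel E H.
Qed.

Lemma reduce_red w : reduced (reduce w).
Proof. elim: w => [|x w IH] //; rewrite reduce_cons; exact: step_red. Qed.

Lemma stepK x acc : reduced acc -> step x (step (linv x) acc) = acc.
Proof.
case: acc => [|y acc] /=; first by rewrite eqxx.
rewrite linvK; case: eqP => [->|Hne] H.
  case: acc H => [|z acc] //= /andP[H1 H2].
  by rewrite (negbTE H1).
by rewrite /= eqxx.
Qed.

Lemma reduce_invK p l : reduce (ginv p ++ p ++ l) = reduce l.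
Proof.
elim: p l => [|x p IH] l //.
rewrite ginv_cons -catA reduce_cat.
have E : reduce ([:: linv x] ++ x :: p ++ l) = reduce (p ++ l).
  rewrite cat1s !reduce_cons.
  by have := stepK (linv x) (reduce_red (p ++ l)); rewrite linvK.
by rewrite E -reduce_cat IH.
Qed.

Lemma reduce_id w : reduced w -> reduce w = w.
Proof.
elim: w => [|x w IH] // H; rewrite reduce_cons IH; last exact: path_sorted H.
case: w H {IH} => [|y w] //= /andP[H1 _]; by rewrite (negbTE H1).
Qed.

Lemma reduced_ginv w : reduced w -> reduced (ginv w).
Proof.
rewrite /reduced /ginv rev_sorted sorted_map => H.
apply: sub_sorted H => a b; rewrite /relpre /nocancel => Hn.
apply/eqP => E; move/eqP: Hn; apply.
by rewrite /= E linvK.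
Qed.

Theorem lemma5p6 (r n : nat) (t : seq letter) (y : stream) :
  2 <= r -> 2 <= n -> inGamma r t -> inY r y ->
  starts_with (u n) t ->
  (D r n (act t y) <-> ~ starts_with_bd r (gmul (ginv t) (gmul (u n) [:: gb])) y).
Proof.
move=> Hr Hn /andP[Ht Htb] [HyB HyR] /prefixP [w Hw].
set A := nseq n ga ++ gb :: nseq n (linv ga).
have EU : u n = A ++ [:: linv gb] by rewrite /u /A -catA.
have Hw' : reduced (linv gb :: w).
  move: Ht; rewrite Hw EU -catA /= /reduced => /cat_sorted2 [_ //].
have HyR' : rY y by move=> k; exact: HyR.
have HwB : all (fun l => l.1 < r) w by move: Htb; rewrite Hw all_cat => /andP[].
set z := act w y.
have HzR : rY z by exact: act_rY.
have HzB : bY r z by apply: act_bY.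
have Hact : act t y = act (u n) z by rewrite Hw act_cat.
have Hs : gmul (ginv t) (gmul (u n) [:: gb]) = ginv w ++ [:: gb].
  rewrite /gmul EU -catA /=.
  have -> : reduce (A ++ [:: linv gb; gb]) = A.
    rewrite reduce_cat /=. idtac.
    rewrite -/(reduce A) reduce_id //.
    move: Ht; rewrite Hw EU -catA /reduced => /cat_sorted2 [//].
  rewrite Hw EU ginv_cat ginv_cat /= linvK -catA.
  have -> : ginv w ++ (gb :: ginv A) ++ A = (ginv w ++ [:: gb]) ++ (ginv A ++ A ++ [::]).
    by rewrite cats0 -catA.
  rewrite reduce_cat reduce_invK -reduce_cat cats0 reduce_id //.
  by have := reduced_ginv Hw'; rewrite ginv_cons linvK.
have Hlast : last (z 0) (u n) = linv gb by rewrite EU last_cat.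
have HD : D r n (act t y) <-> z 0 != gb.
  split.
    case=> _ [y' [[HB' HR'] [Heq Hne]]].
    have HR'' : rY y' by move=> k; exact: HR'.
    have E : act (u n) z = act (u n) y'.
      by rewrite -Hact; apply: functional_extensionality.
    have Ezy : z = y' by rewrite -(actK (u n) HzR) E actK.
    by move: Hne; rewrite -Ezy Hlast linvK.
  move=> Hz; split; first by rewrite EU; case: (A).
  exists z; split; first by split => //; exact: HzR.
  by split; [rewrite Hact | rewrite Hlast linvK].
have HS : starts_with_bd r (ginv w ++ [:: gb]) y <-> z 0 = gb.
  split.
    case=> _ [y' [[HB' HR'] [Heq Hne]]].
    have HR'' : rY y' by move=> k; exact: HR'.
    have Ey : y = act (ginv w ++ [:: gb]) y' by apply: functional_extensionality.
    move: Hne; rewrite last_cat /= => Hne.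
    rewrite /z Ey act_cat actKV; last exact: act1_rY.
    by rewrite act1 (negbTE Hne).
  move=> Hz0; split; first by rewrite cats1 -size_eq0 size_rcons.
  exists (fun k => z k.+1); split.
    by split => k; [exact: HzB | exact: HzR].
  have Hne : z 1 != linv gb by have := HzR 0; rewrite Hz0.
  split; last by rewrite last_cat.
  move=> k; rewrite act_cat act1 (negbTE Hne).
  have -> : scons gb (fun k => z k.+1) = z.
    by apply: functional_extensionality => -[|j] //=.
  by rewrite /z actK.
rewrite Hs; split => [/HD Hz /HS E | H].
  by move: Hz; rewrite E eqxx.
by apply/HD; apply/negP => /eqP /HS.
Qed.
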